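(* Let $\delta,\varepsilon,\gamma\in\mathbb{R}$ with $\varepsilon\neq 0$, let $\{\alpha_j\}_{j\ge1}$, $\{\beta_j\}_{j\ge1}$ be bounded real sequences with all terms nonzero, and let $\{\lambda_j\}_{j\ge1}$ be a real sequence with $\lambda_j\to\infty$. Consider real sequences $\mathbf c=(c_1,c_2,\dots)$ satisfying $$(\delta-\lambda_1-\gamma\varepsilon)c_1+\alpha_1\varepsilon c_2=0,\qquad \beta_{j-1}\varepsilon c_{j-1}+(\delta-\lambda_j)c_j+\alpha_j\varepsilon c_{j+1}=0\quad (j\ge 2).$$ Then: (a) the set of such sequences is a one-dimensional real vector space, i.e. a solution is unique up to multiplication by a constant (and is determined by $c_1$); (b) if $\mathbf c$ is a nontrivial solution and $\mathbf c\in\ell^2$, then $\dfrac{c_j}{c_{j-1}}\sim\dfrac{\beta_{j-1}\varepsilon}{\lambda_j-\delta}$; if $\mathbf c$ is a nontrivial solution and $\mathbf c\notin\ell^2$, then $\dfrac{c_j}{c_{j-1}}\sim\dfrac{\lambda_{j-1}-\delta}{\alpha_{j-1}\varepsilon}$.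
   Context: $\ell^2$ denotes the space of real sequences $(x_1,x_2,\dots)$ with $\sum_j|x_j|^2<\infty$. The notation $a_j\sim b_j$ means $a_j/b_j\to1$ as $j\to\infty$. The system above is equivalent to the infinite matrix equation $T\mathbf c=0$ where $T$ is tridiagonal with diagonal $(\delta-\lambda_1-\gamma\varepsilon,\delta-\lambda_2,\delta-\lambda_3,\dots)$, superdiagonal $(\alpha_1\varepsilon,\alpha_2\varepsilon,\dots)$ and subdiagonal $(\beta_1\varepsilon,\beta_2\varepsilon,\dots)$. *)

(* Defs.v *)
From Stdlib Require Import Reals.
Open Scope R_scope.

(* Sequences are 0-indexed: c n stands for the paper's c_{n+1}
   (likewise alpha, beta, lambda). *)

Definition is_solution (delta eps gamma : R) (alpha beta lambda : nat -> R)
  (c : nat -> R) : Prop :=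
  (delta - lambda 0%nat - gamma * eps) * c 0%nat + alpha 0%nat * eps * c 1%nat = 0 /\
  (forall n : nat,
     beta n * eps * c n + (delta - lambda (S n)) * c (S n)
       + alpha (S n) * eps * c (S (S n)) = 0).

Definition in_l2 (c : nat -> R) : Prop :=
  exists l : R, Un_cv (fun n => sum_f_R0 (fun j => (c j) ^ 2) n) l.

Definition bounded_seq (u : nat -> R) : Prop :=
  exists M : R, forall n : nat, Rabs (u n) <= M.

Definition asymp_equiv (a b : nat -> R) : Prop :=
  Un_cv (fun n => a n / b n) 1.

(* Main.v *)
Require Import Defs.
From Stdlib Require Import Reals Lra Lia Psatz Classical.
Open Scope R_scope.

Lemma prod3 a e x : a <> 0 -> e <> 0 -> a * e * x = 0 -> x = 0.
Proof.
  intros Ha He H. destruct (Rmult_integral _ _ H) as [H1|H1]; auto.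
  destruct (Rmult_integral _ _ H1); contradiction.
Qed.


Lemma div_bound X Y Z : Y <> 0 -> Rabs X <= Z * Rabs Y -> Rabs (X / Y) <= Z.
Proof.
  intros HY H. unfold Rdiv. rewrite Rabs_mult, Rabs_inv.
  assert (0 < Rabs Y) by (apply Rabs_pos_lt; auto).
  apply Rmult_le_reg_r with (Rabs Y); auto.
  rewrite Rmult_assoc, Rinv_l; lra.
Qed.

Lemma div_lt C L e : 0 < L -> C < e * L -> C / L < e.
Proof.
  intros HL H. apply Rmult_lt_reg_r with L; auto.
  unfold Rdiv. rewrite Rmult_assoc, Rinv_l; lra.
Qed.

Lemma div_le C L e : 0 < L -> C <= e * L -> C / L <= e.
Proof.
  intros HL H. apply Rmult_le_reg_r with L; auto.
  unfold Rdiv. rewrite Rmult_assoc, Rinv_l; lra.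
Qed.

Lemma alg_dom a e c0 c1 c2 b L :
  a * e * c2 = L * c1 - b * e * c0 -> c1 <> 0 -> L <> 0 -> a <> 0 -> e <> 0 ->
  (c2 / c1) / (L / (a * e)) - 1 = - (b * e * c0) / (c1 * L).
Proof.
  intros H H1 HL Ha He.
  replace c2 with ((L * c1 - b * e * c0) / (a * e)).
  - field; auto.
  - rewrite <- H. field; auto.
Qed.

Lemma alg_min a e c0 c1 c2 b L :
  b * e * c0 = L * c1 - a * e * c2 -> c0 <> 0 -> c1 <> 0 -> L <> 0 -> b <> 0 -> e <> 0 ->
  1 - a * e * c2 / (c1 * L) <> 0 ->
  (c1 / c0) / (b * e / L) - 1 = (a * e * c2 / (c1 * L)) / (1 - a * e * c2 / (c1 * L)).
Proof.
  intros H H0 H1 HL Hb He Hx.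
  assert (Hd : L * c1 - a * e * c2 <> 0).
  { rewrite <- H. intro Hc. apply prod3 in Hc; auto. }
  assert (Hd' : c1 * L - a * e * c2 <> 0) by (rewrite Rmult_comm; auto).
  replace c0 with ((L * c1 - a * e * c2) / (b * e)).
  - field. repeat split; auto.
  - rewrite <- H. field; auto.
Qed.
Lemma t1 a A e x y z b B L : 0 <= a <= A -> 0 < A -> 0 <= b <= B -> 0 < e -> 0 <= x -> 0 < y -> 0 <= z <= y ->
  L > 2*(A+B)*e+1 -> a * e * x >= L * y - b * e * z -> y < x.
Proof.
  intros. assert (a*e*x <= A*e*x) by (apply Rmult_le_compat_r; [lra| apply Rmult_le_compat_r; lra]).
  assert (b*e*z <= B*e*y) by (apply Rmult_le_compat; try nra).
  assert (L*y >= (2*(A+B)*e+1)*y) by nra.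
  assert (0 <= B*e*y) by (apply Rmult_le_pos; nra). assert (0 <= A*e*y) by (apply Rmult_le_pos; nra). assert (A*e*x > A*e*y) by lra.
  apply Rmult_lt_reg_l with (A*e); nra.
Qed.
Lemma t2 a A e x y z b B L : 0 <= a <= A -> 0 < A -> 0 <= b <= B -> 0 < e -> 0 <= x -> x < y -> y < z ->
  L > 2*(A+B)*e+1 -> L * y <= b * e * z + a * e * x -> y <= z / 2.
Proof.
  intros. assert (a*e*x <= A*e*z) by (apply Rmult_le_compat; nra).
  assert (b*e*z <= B*e*z) by (apply Rmult_le_compat_r; nra).
  assert (L*y >= (2*(A+B)*e+1)*y) by nra.
  assert (2*((A+B)*e)*y <= (A+B)*e*z) by nra.
  assert (0 < (A+B)*e) by nra.
  nra.
Qed.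

Section S.
Variables (delta eps gamma : R) (alpha beta lambda : nat -> R).
Hypothesis Heps : eps <> 0.
Hypothesis Halpha_nz : forall n : nat, alpha n <> 0.
Hypothesis Hbeta_nz : forall n : nat, beta n <> 0.
Notation sol := (is_solution delta eps gamma alpha beta lambda).

Lemma sol_lin c d t : sol c -> sol d -> sol (fun n => c n - t * d n).
Proof.
  intros [Hc0 Hc] [Hd0 Hd]. split.
  - transitivity (((delta - lambda 0%nat - gamma * eps) * c 0%nat + alpha 0%nat * eps * c 1%nat)
      - t * ((delta - lambda 0%nat - gamma * eps) * d 0%nat + alpha 0%nat * eps * d 1%nat)).
    + ring.
    + rewrite Hc0, Hd0; ring.
  - intro n.
    transitivity ((beta n * eps * c n + (delta - lambda (S n)) * c (S n)
       + alpha (S n) * eps * c (S (S n))) - t * (beta n * eps * d n + (delta - lambda (S n)) * d (S n)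
       + alpha (S n) * eps * d (S (S n)))).
    + ring.
    + rewrite Hc, Hd; ring.
Qed.

Lemma sol_zero c : sol c -> c 0%nat = 0 -> forall n, c n = 0.
Proof.
  intros [H0 H] Hz.
  assert (Hz1 : c 1%nat = 0).
  { apply (prod3 (alpha 0%nat) eps); auto. rewrite Hz in H0. lra. }
  assert (forall n, c n = 0 /\ c (S n) = 0).
  { induction n as [|n [IH1 IH2]]; auto. split; auto.
    apply (prod3 (alpha (S n)) eps); auto. specialize (H n).
    rewrite IH1, IH2 in H. lra. }
  intro n; apply H1.
Qed.

Lemma sol_back c : sol c -> forall k, c k = 0 -> c (S k) = 0 -> c 0%nat = 0.
Proof.
  intros [H0 H]. induction k as [|k IH]; intros Hk HSk; auto.
  apply IH; auto. specialize (H k). rewrite Hk, HSk in H.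
  apply (prod3 (beta k) eps); auto. lra.
Qed.

Fixpoint pv (n : nat) : R * R :=
  match n with
  | O => (1, - (delta - lambda 0%nat - gamma * eps) / (alpha 0%nat * eps))
  | S m => let (a, b) := pv m in
      (b, - (beta m * eps * a + (delta - lambda (S m)) * b) / (alpha (S m) * eps))
  end.

Lemma pv_S n : fst (pv (S n)) = snd (pv n).
Proof. simpl. destruct (pv n); reflexivity. Qed.

Lemma pv_S2 n : snd (pv (S n)) =
  - (beta n * eps * fst (pv n) + (delta - lambda (S n)) * snd (pv n)) / (alpha (S n) * eps).
Proof. simpl. destruct (pv n); reflexivity. Qed.

Lemma pv_sol : sol (fun n => fst (pv n)).
Proof.
  split.
  - rewrite pv_S. simpl. field. split; auto.
  - intro n. rewrite (pv_S (S n)), pv_S2, pv_S. field. split; auto.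
Qed.

Lemma partb (A B : R) (HA : forall n, Rabs (alpha n) <= A) (HB : forall n, Rabs (beta n) <= B)
  (Hlam : cv_infty lambda) c :
  sol c -> (exists n, c n <> 0) ->
  (in_l2 c -> asymp_equiv (fun n => c (S n) / c n)
                    (fun n => beta n * eps / (lambda (S n) - delta))) /\
  (~ in_l2 c -> asymp_equiv (fun n => c (S n) / c n)
                    (fun n => (lambda n - delta) / (alpha n * eps))).
Proof.
  intros Hs Hnt. pose proof Hs as [Hs0 Hr].
  assert (HA0 : 0 < A) by (pose proof (Rabs_pos_lt _ (Halpha_nz 0)); specialize (HA 0%nat); lra).
  assert (HB0 : 0 <= B) by (pose proof (Rabs_pos (beta 0%nat)); specialize (HB 0%nat); lra).
  set (e := Rabs eps). assert (He : 0 < e) by (apply Rabs_pos_lt; auto).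
  assert (HABe : 0 <= 2*(A+B)*e) by nra.
  assert (Hsmall : forall C, 0 <= C -> forall t, 0 < t -> exists N, forall n, (N <= n)%nat ->
            0 < lambda n - delta /\ C / (lambda n - delta) < t).
  { intros C HC t Ht. destruct (Hlam (delta + C / t + 1)) as [N HN]. exists N. intros n Hn.
    specialize (HN n Hn).
    assert (0 <= C/t) by (unfold Rdiv; apply Rmult_le_pos; [lra| left; apply Rinv_0_lt_compat; lra]).
    split; [lra|]. apply div_lt; [lra|].
    assert (t * (C/t) = C) by (field; lra). nra. }
  destruct (Hlam (delta + 2*(A+B)*e + 1)) as [N HN].
  assert (Hnz2 : forall k, ~ (c k = 0 /\ c (S k) = 0)).
  { intros k [H1 H2]. destruct Hnt as [m Hm]. apply Hm. apply (sol_zero c Hs).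
    apply (sol_back c Hs k); auto. }
  assert (Hrec : forall n, alpha (S n) * eps * c (S (S n)) =
                   (lambda (S n) - delta) * c (S n) - beta n * eps * c n)
    by (intro n; specialize (Hr n); lra).
  destruct (classic (exists n0, (N <= n0)%nat /\ Rabs (c n0) <= Rabs (c (S n0)) /\ c (S n0) <> 0))
    as [[n0 [Hn0 [Hle Hne]]] | Hno].
  - (* dominant *)
    assert (grow : forall k, Rabs (c (n0+k)%nat) <= Rabs (c (S (n0+k))) /\ c (S (n0+k)) <> 0).
    { induction k as [|k [IH1 IH2]].
      - rewrite Nat.add_0_r; auto.
      - rewrite Nat.add_succ_r. set (m := (n0 + k)%nat) in *.
        assert (HL := HN (S m) ltac:(lia)).
        pose proof (Hrec m) as Hm.
        assert (Ha := HA (S m)). assert (Hb := HB m).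
        pose proof (Rabs_triang_inv ((lambda (S m) - delta) * c (S m)) (beta m * eps * c m)) as T.
        rewrite <- Hm, !Rabs_mult in T. rewrite (Rabs_right (lambda (S m) - delta)) in T by lra.
        fold e in T.
        assert (Hy : 0 < Rabs (c (S m))) by (apply Rabs_pos_lt; auto).
        assert (Hlt : Rabs (c (S m)) < Rabs (c (S (S m)))).
        { apply (t1 (Rabs (alpha (S m))) A e _ _ (Rabs (c m)) (Rabs (beta m)) B (lambda (S m) - delta));
            try split; try apply Rabs_pos; auto; lra. }
        split; [lra|]. intro Hz. rewrite Hz, Rabs_R0 in Hlt. lra. }
    assert (grow' : forall m, (n0 <= m)%nat -> Rabs (c m) <= Rabs (c (S m)) /\ c (S m) <> 0).
    { intros m Hm. replace m with (n0 + (m - n0))%nat by lia. apply grow. }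
    split.
    + intros [l Hl]. exfalso.
      set (y0 := Rabs (c (S n0))).
      assert (Hy0 : 0 < y0) by (apply Rabs_pos_lt; auto).
      assert (Hge : forall k, y0 <= Rabs (c (S (n0 + k)))).
      { induction k as [|k IH]. - rewrite Nat.add_0_r; unfold y0; lra.
        - destruct (grow (S k)) as [G _]. rewrite Nat.add_succ_r in *. lra. }
      destruct (Hl (y0^2/2)) as [N1 HN1]. { nra. }
      assert (A1 := HN1 (n0 + N1)%nat ltac:(lia)).
      assert (A2 := HN1 (S (n0 + N1)) ltac:(lia)).
      unfold Rdist in A1, A2.
      assert (Es : sum_f_R0 (fun j => c j ^ 2) (S (n0 + N1)) =
         sum_f_R0 (fun j => c j ^ 2) (n0 + N1) + c (S (n0 + N1)) ^ 2) by reflexivity.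
      rewrite Es in A2.
      apply Rabs_def2 in A1. apply Rabs_def2 in A2.
      assert (G := Hge N1). pose proof (Rabs_pos (c (S (n0 + N1)))).
      assert (y0 ^ 2 <= c (S (n0 + N1)) ^ 2) by (rewrite <- (pow2_abs (c (S (n0 + N1)))); nra). lra.
    + intros _. intros t Ht. destruct (Hsmall (B*e) ltac:(nra) t Ht) as [N2 HN2].
      exists (max N2 (S n0)). intros n Hn. destruct n as [|m]; [lia|].
      destruct (grow' m ltac:(lia)) as [G1 G2].
      destruct (HN2 (S m) ltac:(lia)) as [HL1 HL2].
      unfold Rdist.
      rewrite (alg_dom (alpha (S m)) eps (c m) (c (S m)) (c (S (S m))) (beta m) (lambda (S m) - delta));
        auto; try lra.
      eapply Rle_lt_trans; [|exact HL2].
      apply div_bound.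
      { intro Hz. apply Rmult_integral in Hz. destruct Hz; [auto|lra]. }
      rewrite Rabs_Ropp, !Rabs_mult, (Rabs_right (lambda (S m) - delta)) by lra. fold e.
      replace (B * e / (lambda (S m) - delta) * (Rabs (c (S m)) * (lambda (S m) - delta)))
        with (B * e * Rabs (c (S m))) by (field; lra).
      pose proof (HB m). pose proof (Rabs_pos (beta m)). pose proof (Rabs_pos (c m)).
      apply Rmult_le_compat; try nra.
  - (* minimal *)
    assert (Hdec : forall n, (N <= n)%nat -> Rabs (c (S n)) < Rabs (c n)).
    { intros n Hn. destruct (Rlt_le_dec (Rabs (c (S n))) (Rabs (c n))) as [h|h]; auto. exfalso.
      destruct (Req_dec (c (S n)) 0) as [h0|h0].
      - rewrite h0, Rabs_R0 in h. apply (Hnz2 n). split; auto.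
        destruct (Req_dec (c n) 0); auto. pose proof (Rabs_pos_lt _ H). lra.
      - apply Hno. exists n; auto. }
    assert (Hnzc : forall n, (N <= n)%nat -> c n <> 0).
    { intros n Hn Hz. pose proof (Hdec n Hn). rewrite Hz, Rabs_R0 in H.
      pose proof (Rabs_pos (c (S n))). lra. }
    assert (Hhalf : forall n, (N <= n)%nat -> Rabs (c (S n)) <= Rabs (c n) / 2).
    { intros n Hn.
      assert (HL := HN (S n) ltac:(lia)).
      assert (Ha := HA (S n)). assert (Hb := HB n).
      assert (E1 : (lambda (S n) - delta) * c (S n) = beta n * eps * c n + alpha (S n) * eps * c (S (S n)))
        by (specialize (Hr n); lra).
      pose proof (Rabs_triang (beta n * eps * c n) (alpha (S n) * eps * c (S (S n)))) as T.
      rewrite <- E1, !Rabs_mult in T. rewrite (Rabs_right (lambda (S n) - delta)) in T by lra.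
      fold e in T.
      apply (t2 (Rabs (alpha (S n))) A e (Rabs (c (S (S n)))) _ _ (Rabs (beta n)) B (lambda (S n) - delta));
        try split; try apply Rabs_pos; auto; try lra.
      all: try (apply Hdec; lia). }
    assert (Hl2 : in_l2 c).
    { set (S := fun n => sum_f_R0 (fun j => c j ^ 2) n).
      assert (Hg : Un_growing S).
      { intro n. unfold S. simpl. pose proof (pow2_ge_0 (c (Datatypes.S n))). lra. }
      assert (Hmono : forall n k, S n <= S (n + k)%nat).
      { intros n k. induction k as [|k IH]. rewrite Nat.add_0_r; lra.
        rewrite Nat.add_succ_r. pose proof (Hg (n + k)%nat). lra. }
      assert (Hb1 : forall k, S (N + k)%nat + c (N + k)%nat ^ 2 / 3 <= S N + c N ^ 2 / 3).
      { induction k as [|k IH]. rewrite Nat.add_0_r; lra.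
        rewrite Nat.add_succ_r.
        assert (S (Datatypes.S (N + k)) = S (N + k)%nat + c (Datatypes.S (N + k)) ^ 2) by reflexivity.
        pose proof (Hhalf (N + k)%nat ltac:(lia)).
        pose proof (Rabs_pos (c (Datatypes.S (N + k)))).
        rewrite <- (pow2_abs (c (Datatypes.S (N + k)))), <- (pow2_abs (c (N + k)%nat)) in *.
        nra. }
      assert (Hub : forall n, S n <= S N + c N ^ 2 / 3).
      { intro n. pose proof (pow2_ge_0 (c N)). destruct (Nat.le_gt_cases n N).
        - replace N with (n + (N - n))%nat at 1 by lia. pose proof (Hmono n (N - n)%nat). lra.
        - replace n with (N + (n - N))%nat by lia. pose proof (Hb1 (n - N)%nat).
          pose proof (pow2_ge_0 (c (N + (n - N))%nat)). lra. }
      destruct (growing_cv S Hg) as [l Hl].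
      { exists (S N + c N ^ 2 / 3). intros x [i ->]. apply Hub. }
      exists l. exact Hl. }
    split; [|intro Hc; contradiction].
    intros _. intros t Ht. destruct (Hsmall (2*A*e) ltac:(nra) t Ht) as [N2 HN2].
    exists (max N N2). intros n Hn. unfold Rdist.
    assert (HL := HN (S n) ltac:(lia)).
    destruct (HN2 (S n) ltac:(lia)) as [HL1 HL2].
    set (L := lambda (S n) - delta) in *.
    assert (HL' : L > 2*(A+B)*e+1) by (unfold L; lra).
    set (x := alpha (S n) * eps * c (S (S n)) / (c (S n) * L)).
    assert (Hc1 : c (S n) <> 0) by (apply Hnzc; lia).
    assert (Hc0 : c n <> 0) by (apply Hnzc; lia).
    assert (HcL : c (S n) * L <> 0) by (intro Hz; apply Rmult_integral in Hz; destruct Hz; [auto|lra]).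
    assert (Hx : Rabs x <= A * e / L).
    { apply div_bound; auto. rewrite !Rabs_mult, (Rabs_right L) by lra. fold e.
      replace (A * e / L * (Rabs (c (S n)) * L)) with (A * e * Rabs (c (S n))) by (field; lra).
      pose proof (HA (S n)). pose proof (Rabs_pos (alpha (S n))).
      pose proof (Hdec (S n) ltac:(lia)). pose proof (Rabs_pos (c (S (S n)))).
      apply Rmult_le_compat; try nra. }
    assert (Hx2 : A * e / L <= 1/2).
    { apply div_le; [lra|]. assert (0 <= B * e) by nra. lra. }
    pose proof (Rabs_triang_inv 1 x) as T. rewrite Rabs_R1 in T.
    assert (H1x : 1 - x <> 0) by (intro Hz; rewrite Hz, Rabs_R0 in T; lra).
    rewrite (alg_min (alpha (S n)) eps (c n) (c (S n)) (c (S (S n))) (beta n) L); auto; try lra.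
    2: { specialize (Hr n). unfold L. lra. }
    apply Rle_lt_trans with (2 * Rabs x).
    + fold x. apply div_bound; auto. pose proof (Rabs_pos x).
      assert (Rabs (1 - x) >= 1/2) by lra. nra.
    + assert (2 * (A * e / L) = 2 * A * e / L) by (field; lra). lra.
Qed.

End S.

Theorem corollary3p3
  (delta eps gamma : R) (alpha beta lambda : nat -> R)
  (Heps : eps <> 0)
  (Halpha_b : bounded_seq alpha) (Hbeta_b : bounded_seq beta)
  (Halpha_nz : forall n : nat, alpha n <> 0)
  (Hbeta_nz : forall n : nat, beta n <> 0)
  (Hlambda : cv_infty lambda) :
  ((exists v : nat -> R,
      is_solution delta eps gamma alpha beta lambda v /\
      (exists n : nat, v n <> 0) /\
      (forall c : nat -> R, is_solution delta eps gamma alpha beta lambda c ->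
         exists t : R, forall n : nat, c n = t * v n)) /\
   (forall c d : nat -> R,
      is_solution delta eps gamma alpha beta lambda c ->
      is_solution delta eps gamma alpha beta lambda d ->
      c 0%nat = d 0%nat -> forall n : nat, c n = d n)) /\
  (forall c : nat -> R,
     is_solution delta eps gamma alpha beta lambda c ->
     (exists n : nat, c n <> 0) ->
     (in_l2 c ->
        asymp_equiv (fun n => c (S n) / c n)
                    (fun n => beta n * eps / (lambda (S n) - delta))) /\
     (~ in_l2 c ->
        asymp_equiv (fun n => c (S n) / c n)
                    (fun n => (lambda n - delta) / (alpha n * eps)))).
Proof.
  split; [split|].
  - exists (fun n => fst (pv delta eps gamma alpha beta lambda n)).
    split; [apply pv_sol; auto|]. split.
    + exists 0%nat. simpl. lra.
    + intros c Hc. exists (c 0%nat). intro n.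
      pose proof (sol_lin delta eps gamma alpha beta lambda c _ (c 0%nat) Hc
                    (pv_sol delta eps gamma alpha beta lambda Heps Halpha_nz)) as Hl.
      pose proof (sol_zero delta eps gamma alpha beta lambda Heps Halpha_nz _ Hl) as Hz.
      simpl in Hz. specialize (Hz ltac:(ring) n). lra.
  - intros c d Hc Hd H0 n.
    pose proof (sol_lin delta eps gamma alpha beta lambda c d 1 Hc Hd) as Hl.
    pose proof (sol_zero delta eps gamma alpha beta lambda Heps Halpha_nz _ Hl) as Hz.
    simpl in Hz. specialize (Hz ltac:(rewrite H0; ring) n). lra.
  - intros c Hc Hnt. destruct Halpha_b as [A HA]. destruct Hbeta_b as [B HB].
    eapply partb; eauto.
Qed.
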